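(* Let $G=(V,E)$ be a directed unweighted graph with finite diameter $D=3h+z$, where $h\ge 0$ and $z\in\{0,1,2\}$, and let $s\in[1,n]$. Let $w\in V$ satisfy $d_s^{\mathrm{out}}(w)=\max_{v\in V}d_s^{\mathrm{out}}(v)$ and let $S\subseteq V$ be any set with $S\cap N_s^{\mathrm{out}}(v)\neq\emptyset$ for every $v\in V$. Let $\hat D$ be the maximum of $d^{\mathrm{out}}(w)$, $\max_{u\in N_s^{\mathrm{out}}(w)}d^{\mathrm{in}}(u)$ and $\max_{u\in S}d^{\mathrm{out}}(u)$. Then $\hat D\le D$; moreover $\hat D\ge 2h+z$ if $z\in\{0,1\}$ and $\hat D\ge 2h+1$ if $z=2$.
   Context: $d(u,v)$ is the shortest-path distance from $u$ to $v$; $d^{\mathrm{out}}(v)=\max_u d(v,u)$, $d^{\mathrm{in}}(v)=\max_u d(u,v)$. $N_s^{\mathrm{out}}(v)$ is the set of the $s$ vertices $u$ with smallest $d(v,u)$, ties broken by smaller vertex id; $d_s^{\mathrm{out}}(v)=\max_{u\in N_s^{\mathrm{out}}(v)} d(v,u)$. *)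

(* Defs.v *)
From mathcomp Require Import all_boot.
Set Implicit Arguments. Unset Strict Implicit. Unset Printing Implicit Defensive.

Fixpoint ball n (e : rel 'I_n) (k : nat) (u : 'I_n) : {set 'I_n} :=
  match k with
  | 0 => [set u]
  | k'.+1 => ball e k' u :|: [set y | [exists x in ball e k' u, e x y]]
  end.

(* shortest-path distance d(u,v): least k with v in ball e k u.
   (Every shortest path has < n arcs, so searching k in [0, n) suffices when v is
   reachable from u; under strong connectivity this is exactly d(u,v).) *)
Definition dist n (e : rel 'I_n) (u v : 'I_n) : nat :=
  find (fun k => v \in ball e k u) (iota 0 n).

Definition dout n (e : rel 'I_n) (v : 'I_n) : nat := \max_(u : 'I_n) dist e v u.
Definition din n (e : rel 'I_n) (v : 'I_n) : nat := \max_(u : 'I_n) dist e u v.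
Definition diam n (e : rel 'I_n) : nat := \max_(u : 'I_n) dout e u.

Definition closer n (e : rel 'I_n) (v x u : 'I_n) : bool :=
  (dist e v x < dist e v u) || ((dist e v x == dist e v u) && (x < u)).

(* N_s^out(v): the s vertices u with smallest d(v,u), ties broken by smaller id,
   i.e. those u with fewer than s vertices strictly before them in this order. *)
Definition Nout n (e : rel 'I_n) (s : nat) (v : 'I_n) : {set 'I_n} :=
  [set u | #|[set x | closer e v x u]| < s].

Definition dsout n (e : rel 'I_n) (s : nat) (v : 'I_n) : nat :=
  \max_(u in Nout e s v) dist e v u.

(* Main.v *)
Require Import Defs.
From mathcomp Require Import all_boot.
From mathcomp Require Import zify.
Set Implicit Arguments. Unset Strict Implicit.

Section G.
Variables (n : nat) (e : rel 'I_n).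

Lemma ball_mono k u : ball e k u \subset ball e k.+1 u.
Proof. by rewrite /= subsetUl. Qed.

Lemma ball_comp j k u x y : x \in ball e j u -> y \in ball e k x -> y \in ball e (j + k) u.
Proof.
move=> Hx; elim: k y => [|k IH] y /=; first by rewrite in_set1 addn0 => /eqP ->.
rewrite addnS /= !in_setU => /orP [/IH -> //|].
rewrite inE => /existsP [z /andP [Hz Hzy]].
apply/orP; right; rewrite inE; apply/existsP; exists z; by rewrite IH.
Qed.

Lemma ball_split j k u y : y \in ball e (j + k) u -> exists2 x, x \in ball e j u & y \in ball e k x.
Proof.
elim: k y => [|k IH] y; first by rewrite addn0 => H; exists y => //; rewrite in_set1.
rewrite addnS /= in_setU => /orP [/IH [x Hx Hy]|].
  by exists x => //; rewrite in_setU Hy.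
rewrite inE => /existsP [z /andP [Hz Hzy]].
have [x Hx Hzx] := IH _ Hz.
exists x => //; rewrite in_setU; apply/orP; right; rewrite inE.
by apply/existsP; exists z; rewrite Hzx.
Qed.

Lemma ball_path x p : path e x p -> last x p \in ball e (size p) x.
Proof.
elim: p x => [|y p IH] x /=; first by rewrite in_set1.
move=> /andP [Hxy Hp].
have H1 : y \in ball e 1 x.
  by rewrite /= in_setU; apply/orP; right; rewrite inE; apply/existsP; exists x; rewrite in_set1 eqxx.
by have := ball_comp H1 (IH _ Hp); rewrite add1n.
Qed.

Hypothesis hconn : forall u v : 'I_n, connect e u v.

Lemma reach u v : exists2 k, k < n & v \in ball e k u.
Proof.
have /connectP [p Hp Hl] := hconn u v.
rewrite Hl; case: (shortenP Hp) => p' Hp' Hu _.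
exists (size p'); last exact: ball_path.
have Hc : #|u :: p'| <= #|'I_n| by apply: max_card.
by move: Hc; rewrite card_ord (card_uniqP Hu).
Qed.

Lemma dist_ball u v : v \in ball e (dist e u v) u.
Proof.
have [k Hk Hb] := reach u v.
have Hh : has (fun k => v \in ball e k u) (iota 0 n).
  by apply/hasP; exists k => //; rewrite mem_iota.
have := nth_find 0 Hh.
have Hl : find (fun k => v \in ball e k u) (iota 0 n) < n.
  by have := has_find (fun k => v \in ball e k u) (iota 0 n); rewrite Hh size_iota => /esym.
by rewrite nth_iota.
Qed.

Lemma dist_le u v k : v \in ball e k u -> dist e u v <= k.
Proof.
move=> Hb; rewrite leqNgt; apply/negP => Hlt.
have Hk : k < n.
  apply: leq_trans Hlt _. have := find_size (fun k => v \in ball e k u) (iota 0 n).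
  by rewrite size_iota.
have := before_find 0 Hlt. by rewrite nth_iota // add0n Hb.
Qed.

Lemma dist_tri u v x : dist e u x <= dist e u v + dist e v x.
Proof. apply: dist_le; exact: ball_comp (dist_ball u v) (dist_ball v x). Qed.

Lemma dist_refl u : dist e u u = 0.
Proof. apply/eqP; rewrite -leqn0; apply: dist_le; by rewrite /= in_set1. Qed.

End G.

Lemma lex_trans (a b c x y z : nat) :
  (a < b) || ((a == b) && (x < y)) -> (b < c) || ((b == c) && (y < z)) ->
  (a < c) || ((a == c) && (x < z)).
Proof.
case/orP => [H1|/andP [/eqP E1 H1]]; case/orP => [H2|/andP [/eqP E2 H2]]; subst.
- by rewrite (ltn_trans H1 H2).
- by rewrite H1.
- by rewrite H2.
- by rewrite eqxx (ltn_trans H1 H2) orbT.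
Qed.

Theorem lemma4 (n : nat) (e : rel 'I_n)
  (* finite diameter: every vertex reaches every vertex *)
  (hconn : forall u v : 'I_n, connect e u v)
  (h z : nat) (hz : z <= 2) (hD : diam e = 3 * h + z)
  (s : nat) (hs : 1 <= s <= n)
  (w : 'I_n) (hw : dsout e s w = \max_(v : 'I_n) dsout e s v)
  (S : {set 'I_n}) (hS : forall v : 'I_n, S :&: Nout e s v != set0) :
  let Dhat := maxn (dout e w)
                (maxn (\max_(u in Nout e s w) din e u) (\max_(u in S) dout e u)) in
  Dhat <= diam e /\
  (z <= 1 -> 2 * h + z <= Dhat) /\
  (z = 2 -> 2 * h + 1 <= Dhat).
Proof.
move=> Dhat.
have doutD u : dout e u <= diam e by apply: leq_bigmax.
have distD u v : dist e u v <= diam e.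
  apply: leq_trans (doutD u); rewrite /dout; exact: leq_bigmax.
have dinD u : din e u <= diam e by apply/bigmax_leqP => x _; apply: distD.
have Hup : Dhat <= diam e.
  rewrite /Dhat !geq_max doutD /=; apply/andP; split; apply/bigmax_leqP => *;
  [exact: dinD | exact: doutD].
suff Hlow : 2 * h + minn z 1 <= Dhat.
  split=> //; split => Hz.
  - by move: Hlow; rewrite (minn_idPl Hz).
  - by move: Hlow; rewrite Hz.
have n0 : 0 < #|'I_n| by apply/card_gt0P; exists w.
have [a Ha] := eq_bigmax (dout e) n0.
have [b Hb] := eq_bigmax (dist e a) n0.
have Dab : dist e a b = 3 * h + z by rewrite -Hb -[\max_i dist e a i]/(dout e a) -Ha.
have leD1 : dout e w <= Dhat by rewrite /Dhat leq_maxl.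
have leD2 u : u \in Nout e s w -> din e u <= Dhat.
  move=> Hu; rewrite /Dhat; apply: leq_trans (leq_maxr _ _); apply: leq_trans (leq_maxl _ _).
  exact: leq_bigmax_cond.
have leD3 u : u \in S -> dout e u <= Dhat.
  move=> Hu; rewrite /Dhat; apply: leq_trans (leq_maxr _ _); apply: leq_trans (leq_maxr _ _).
  exact: leq_bigmax_cond.
case: (leqP (dsout e s a) h) => Hsa.
- have /set0Pn [u] := hS a; rewrite inE => /andP [uS uN].
  have Hau : dist e a u <= h.
    apply: leq_trans _ Hsa; rewrite /dsout; exact: leq_bigmax_cond.
  have Hub : dist e u b <= dout e u by rewrite /dout; exact: leq_bigmax.
  have := dist_tri hconn a u b; have := leD3 _ uS; lia.
- have Hsw : h < dsout e s w by apply: leq_trans Hsa _; rewrite hw; exact: leq_bigmax.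
  case: (leqP (2 * h + minn z 1) (dout e w)) => Hdw; first exact: leq_trans Hdw leD1.
  have Hwb : dist e w b <= dout e w by rewrite /dout; exact: leq_bigmax.
  set d := dist e w b.
  have Hsplit : minn h d + (d - h) = d by lia.
  have := dist_ball hconn w b; rewrite -/d -{1}Hsplit => /ball_split [x Hx Hxb].
  have Hwx := dist_le Hx; have Hxb' := dist_le Hxb.
  have [u uN Hu] : exists2 u, u \in Nout e s w & h < dist e w u.
    apply/exists_inP; move: Hsw; apply: contraLR; rewrite negb_exists_in => /forallP H.
    rewrite -leqNgt; apply/bigmax_leqP => i Hi; have := H i; rewrite Hi /= -leqNgt; by [].
  have xN : x \in Nout e s w.
    move: uN; rewrite !inE => Hc; apply: leq_trans _ Hc.
    rewrite ltnS; apply: ltnW; apply: proper_card; apply/properP; split.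
      apply/subsetP => y; rewrite !inE => Hy; apply: lex_trans Hy _.
      by rewrite /closer; apply/orP; left; lia.
    exists x; rewrite !inE /closer ?ltnn ?andbF //.
    by apply/orP; left; lia.
  have Hax : dist e a x <= din e x by rewrite /din; exact: leq_bigmax.
  have := dist_tri hconn a x b; have := leD2 _ xN; lia.
Qed.
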